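(* (Principle of Optimality.) Consider an imprecise hidden Markov model as in the context with a fixed output sequence $o_{1:n}\in\mathcal{O}_{1:n}$, under the positivity assumption. Let $k\in\{1,\dots,n-1\}$, $z_{k-1}\in\mathcal{X}_{k-1}$ and $\hat{x}_{k:n}\in\mathcal{X}_{k:n}$. If $\underline{Q}_k(\{\hat{x}_k\}\mid z_{k-1})>0$ and $\underline{S}_k(\{o_k\}\mid\hat{x}_k)>0$, then $$\hat{x}_{k:n}\in\mathrm{opt}(\mathcal{X}_{k:n}\mid z_{k-1},o_{k:n})\ \Rightarrow\ \hat{x}_{k+1:n}\in\mathrm{opt}(\mathcal{X}_{k+1:n}\mid \hat{x}_k,o_{k+1:n}).$$
   Context: Setting: $n\ge1$; $\mathcal{X}_0=\{x_0\}$ a singleton; finite non-empty sets $\mathcal{X}_1,\dots,\mathcal{X}_n$, $\mathcal{O}_1,\dots,\mathcal{O}_n$; $\mathcal{X}_{k:\ell}=\times_{r=k}^\ell\mathcal{X}_r$, $\mathcal{O}_{k:\ell}=\times_{r=k}^\ell\mathcal{O}_r$. Gambles are real maps on finite sets; a coherent lower prevision $\underline{P}$ satisfies $\underline{P}(f)\ge\min f$, $\underline{P}(\lambda f)=\lambda\underline{P}(f)$ for $\lambda\ge0$, $\underline{P}(f+g)\ge\underline{P}(f)+\underline{P}(g)$; $\overline{P}(f)=-\underline{P}(-f)$; $\underline{P}(A)=\underline{P}(\mathbb{I}_A)$. Local models: coherent $\underline{Q}_k(\cdot\mid z_{k-1})$ on gambles on $\mathcal{X}_k$ ($z_{k-1}\in\mathcal{X}_{k-1}$)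 and $\underline{S}_k(\cdot\mid z_k)$ on gambles on $\mathcal{O}_k$ ($z_k\in\mathcal{X}_k$), $k=1,\dots,n$. Joint models: $\underline{E}_n(\cdot\mid z_n):=\underline{S}_n(\cdot\mid z_n)$; for $k<n$, $\underline{E}_k(\cdot\mid X_k)$ (on gambles on $\mathcal{X}_{k+1:n}\times\mathcal{O}_{k:n}$) is the conditionally independent natural extension of $\underline{S}_k(\cdot\mid X_k)$ and $\underline{P}_{k+1}(\cdot\mid X_k)$ (the pointwise smallest separately coherent conditional lower prevision jointly coherent with and extending both, such that given $X_k$, $O_k$ and $(X_{k+1:n},O_{k+1:n})$ are epistemically irrelevant to each other); for gambles $f$ on $\mathcal{X}_{k:n}\times\mathcal{O}_{k:n}$, $\underline{P}_k(f\mid z_{k-1}):=\underline{Q}_k\big(\sum_{z_k}\mathbb{I}_{\{z_k\}}\underline{E}_k(f(z_k,\cdot)\mid z_k)\,\big|\,z_{k-1}\big)$. Standing positivity assumption: $\overline{Q}_k(\{z_k\}\mid z_{k-1})>0$ and $\overline{S}_k(\{o_k\}\mid z_k)>0$ for all $k,z_{k-1},z_k,o_k$. Maximal subsequences: for $k\in\{1,\dots,n\}$ and $z_{k-1}\in\mathcal{X}_{k-1}$, $\hat{x}_{k:n}\in\mathrm{opt}(\mathcal{X}_{k:n}\mid z_{k-1},o_{k:n})$ iff for all $x_{k:n}\in\mathcal{X}_{k:n}$, $\underline{P}_k\big(\mathbb{I}_{o_{k:n}}[\mathbb{I}_{x_{k:n}}-\mathbb{I}_{\hat{x}_{k:n}}]\,\big|\,z_{k-1}\big)\le0$,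 where $\mathbb{I}_{x_{k:n}},\mathbb{I}_{o_{k:n}}$ are indicators of singletons regarded as gambles on $\mathcal{X}_{k:n}\times\mathcal{O}_{k:n}$. *)

(* Defs.v *)
From HB Require Import structures.
From mathcomp Require Import all_boot all_order all_algebra.
From mathcomp Require Import all_classical all_reals.
Set Implicit Arguments. Unset Strict Implicit. Unset Printing Implicit Defensive.
Import Order.TTheory GRing.Theory Num.Theory.
Local Open Scope ring_scope.
Local Open Scope classical_set_scope.

Definition coherent (R : realType) (T : finType) (P : (T -> R) -> R) : Prop :=
  [/\ (forall f : T -> R, exists x : T, f x <= P f),
      (forall (l : R) (f : T -> R), 0 <= l -> P (fun x => l * f x) = l * P f) &
      (forall f g : T -> R, P f + P g <= P (fun x => f x + g x))].

Definition upper (R : realType) (T : finType) (P : (T -> R) -> R) (f : T -> R) : R :=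
  - P (fun x => - f x).

Definition ind (R : realType) (T : finType) (a : T) : T -> R :=
  fun x => (x == a)%:R.

(* A conditional lower prevision P(.|B) on gambles on T, where the partition B
   of T is the one induced by a map cpi : T -> cz (block of w = cpi w). *)
Record cmodel (R : realType) (T : finType) := CModel {
  cz : finType;
  cpi : T -> cz;
  cP : cz -> (T -> R) -> R }.
Arguments cz {R T} _.
Arguments cpi {R T} _ _.
Arguments cP {R T} _ _ _.

Definition cgain (R : realType) (T : finType) (m : cmodel R T) (f : T -> R) : T -> R :=
  fun w => f w - cP m (cpi m w) f.

Definition csupp (R : realType) (T : finType) (m : cmodel R T) (f : T -> R) (w : T) : Prop :=
  exists w', cpi m w' = cpi m w /\ f w' <> 0.

(* Walley's (Williams-Walley) coherence of finitely many conditional lower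
   previsions with domains all gambles on the finite set T: for all gambles
   f_j, all j0, f0 and block B0 = {w | cpi_{j0} w = z0},
     sup_{w in B0 \cup S(f)} [sum_j G_j(f_j|B_j) - G_{j0}(f0|B0)](w) >= 0
   (on a finite set: the maximum is attained). *)
Definition jointly_coherent (R : realType) (T : finType) (m : nat)
    (ms : 'I_m -> cmodel R T) : Prop :=
  forall (fs : 'I_m -> T -> R) (j0 : 'I_m) (f0 : T -> R) (z0 : cz (ms j0)),
  exists w : T,
    (cpi (ms j0) w = z0 \/ exists j : 'I_m, csupp (ms j) (fs j) w) /\
    0 <= \sum_(j < m) cgain (ms j) (fs j) w
         - (if cpi (ms j0) w == z0 then cgain (ms j0) f0 w else 0).

Definition unitF : finType := Finite.clone unit _.

(* E on gambles on A x B is an independent product of P1 (on A) and P2 (on B):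
   E is coherent, extends both marginals, and E is jointly coherent with the
   conditional models expressing that B is epistemically irrelevant to A
   (E(f|b) = P1(f(.,b))) and A is epistemically irrelevant to B
   (E(f|a) = P2(f(a,.))). *)
Definition indep_product (R : realType) (A B : finType)
    (P1 : (A -> R) -> R) (P2 : (B -> R) -> R)
    (E : ((A * B)%type -> R) -> R) : Prop :=
  [/\ coherent E,
      (forall g : A -> R, E (fun w => g w.1) = P1 g),
      (forall h : B -> R, E (fun w => h w.2) = P2 h) &
      jointly_coherent (fun j : 'I_3 =>
        match val j with
        | 0 => @CModel R _ unitF (fun _ => tt) (fun _ => E)
        | 1 => @CModel R _ B (fun w => w.2) (fun b f => P1 (fun a => f (a, b)))
        | _ => @CModel R _ A (fun w => w.1) (fun a f => P2 (fun b => f (a, b)))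
        end)].

(* the independent natural extension: the pointwise smallest independent
   product (taken as the pointwise infimum of all independent products). *)
Definition ine (R : realType) (A B : finType)
    (P1 : (A -> R) -> R) (P2 : (B -> R) -> R) (f : (A * B)%type -> R) : R :=
  inf [set r : R | exists E, indep_product P1 P2 E /\ r = E f].

(* X k, O k : state / output spaces (families of finite types).
   W d k := O_k x X_{k+1:k+d} x O_{k+1:k+d}  (encoded as nested pairs),
   Y d k := X_k x W d k = X_{k:k+d} x O_{k:k+d}. *)
Fixpoint W (X O : nat -> finType) (d k : nat) : finType :=
  match d with
  | 0 => O k
  | d'.+1 => Finite.clone (O k * (X k.+1 * W X O d' k.+1))%type _
  end.
Definition Y (X O : nat -> finType) (d k : nat) : finType :=
  Finite.clone (X k * W X O d k)%type _.

Fixpoint XS (X : nat -> finType) (d k : nat) : finType :=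
  match d with
  | 0 => X k
  | d'.+1 => Finite.clone (X k * XS X d' k.+1)%type _
  end.

Fixpoint projX (X O : nat -> finType) (d : nat) : forall k, Y X O d k -> XS X d k :=
  match d return forall k, Y X O d k -> XS X d k with
  | 0 => fun k y => y.1
  | d'.+1 => fun k y => (y.1, @projX X O d' k.+1 y.2.2)
  end.

Fixpoint projO (X O : nat -> finType) (d : nat) : forall k, Y X O d k -> XS O d k :=
  match d return forall k, Y X O d k -> XS O d k with
  | 0 => fun k y => y.2
  | d'.+1 => fun k y => (y.2.1, @projO X O d' k.+1 y.2.2)
  end.

(* Local models: Q k z = Q_{k+1}(. | z) for z in X_k; S k z = S_k(. | z). *)
(* Joint models E_k(.|z_k) on gambles on W d k (with k + d = n):
   E_n = S_n, E_k = independent natural extension of S_k(.|z_k) and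
   P_{k+1}(.|z_k), where
   P_{k+1}(f|z_k) = Q_{k+1}( sum_{z} I_{z} E_{k+1}(f(z,.)|z) | z_k ). *)
Fixpoint Ecal (R : realType) (X O : nat -> finType)
    (Q : forall k, X k -> (X k.+1 -> R) -> R)
    (S : forall k, X k -> (O k -> R) -> R) (d : nat) :
    forall k, X k -> (W X O d k -> R) -> R :=
  match d return forall k, X k -> (W X O d k -> R) -> R with
  | 0 => fun k z g => S k z g
  | d'.+1 => fun k z g =>
      @ine R (O k) (Y X O d' k.+1) (S k z)
        (fun h => Q k z (fun x => @Ecal R X O Q S d' k.+1 x (fun w => h (x, w)))) g
  end.

(* Pcal Q S d j z = P_{j+1}(. | z) on gambles on Y d (j+1), for z in X_j. *)
Definition Pcal (R : realType) (X O : nat -> finType)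
    (Q : forall k, X k -> (X k.+1 -> R) -> R)
    (S : forall k, X k -> (O k -> R) -> R) (d j : nat) (z : X j)
    (f : Y X O d j.+1 -> R) : R :=
  Q j z (fun x => @Ecal R X O Q S d j.+1 x (fun w => f (x, w))).

(* maximal subsequences: xh in opt(X_{k:n} | z_{k-1}, o_{k:n}) with k = j+1,
   n = k + d, z in X_j. *)
Definition opt (R : realType) (X O : nat -> finType)
    (Q : forall k, X k -> (X k.+1 -> R) -> R)
    (S : forall k, X k -> (O k -> R) -> R) (d j : nat) (z : X j)
    (o : XS O d j.+1) (xh : XS X d j.+1) : Prop :=
  forall x : XS X d j.+1,
    @Pcal R X O Q S d j z (fun y => (@projO X O d j.+1 y == o)%:R * ((@projX X O d j.+1 y == x)%:R - (@projX X O d j.+1 y == xh)%:R))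
      <= 0.

Arguments ind {R T} a _.
Arguments upper {R T} P f.

(* Main.v *)
Require Import Defs.
From HB Require Import structures.
From mathcomp Require Import all_boot all_order all_algebra.
From mathcomp Require Import all_classical all_reals.
From mathcomp Require Import ring lra.
Set Implicit Arguments. Unset Strict Implicit. Unset Printing Implicit Defensive.
Import Order.TTheory GRing.Theory Num.Theory.
Local Open Scope ring_scope.

Local Open Scope classical_set_scope.

Lemma inf_le_el (R : realType) (E : set R) x y :
  (forall r, E r -> y <= r) -> E x -> inf E <= x.
Proof. by move=> lb Ex; apply: ge_inf => //; exists y. Qed.

Lemma le_inf_el (R : realType) (E : set R) x :
  (exists r, E r) -> (forall r, E r -> x <= r) -> x <= inf E.
Proof. by move=> ne lb; apply: lb_le_inf. Qed.

Lemma le_sup_el (R : realType) (E : set R) x y :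
  (forall r, E r -> r <= y) -> E x -> x <= sup E.
Proof. by move=> ub Ex; apply: ub_le_sup => //; exists y. Qed.

Lemma sup_le_el (R : realType) (E : set R) x :
  (exists r, E r) -> (forall r, E r -> r <= x) -> sup E <= x.
Proof. by move=> ne ub; apply: ge_sup. Qed.

Definition lin (R : realType) (T : finType) (p : T -> R) (f : T -> R) : R :=
  \sum_x p x * f x.

Lemma linD (R : realType) (T : finType) (p f g : T -> R) :
  lin p (fun x => f x + g x) = lin p f + lin p g.
Proof. by rewrite /lin -big_split; apply: eq_bigr => x _; rewrite mulrDr. Qed.

Lemma linZ (R : realType) (T : finType) (p f : T -> R) l :
  lin p (fun x => l * f x) = l * lin p f.
Proof. by rewrite /lin mulr_sumr; apply: eq_bigr => x _; rewrite mulrCA. Qed.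

Lemma linN (R : realType) (T : finType) (p f : T -> R) :
  lin p (fun x => - f x) = - lin p f.
Proof. by rewrite /lin -sumrN; apply: eq_bigr => x _; rewrite mulrN. Qed.

Lemma lin0 (R : realType) (T : finType) (p : T -> R) :
  lin p (fun _ => 0) = 0.
Proof. by rewrite /lin big1 // => x _; rewrite mulr0. Qed.

Lemma lin_ind (R : realType) (T : finType) (p : T -> R) a :
  lin p (ind a) = p a.
Proof.
rewrite /lin (bigD1 a) //= /ind eqxx mulr1 big1 ?addr0 // => x /negPf ->.
by rewrite mulr0.
Qed.

Lemma lin_ext (R : realType) (T : finType) (p f g : T -> R) :
  (forall x, f x = g x) -> lin p f = lin p g.
Proof. by move=> fg; apply: eq_bigr => x _; rewrite fg. Qed.

Lemma lin_const (R : realType) (T : finType) (p : T -> R) c :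
  lin p (fun _ => c) = c * \sum_x p x.
Proof. by rewrite /lin mulr_sumr; apply: eq_bigr => x _; rewrite mulrC. Qed.

Lemma coh_ext (R : realType) (T : finType) (P : (T -> R) -> R) f g :
  (forall x, f x = g x) -> P f = P g.
Proof. by move=> fg; congr P; apply: boolp.funext. Qed.

Lemma coh_min (R : realType) (T : finType) (P : (T -> R) -> R) :
  coherent P -> forall f, exists x, f x <= P f.
Proof. by case. Qed.

Lemma coh_hom (R : realType) (T : finType) (P : (T -> R) -> R) :
  coherent P -> forall l f, 0 <= l -> P (fun x => l * f x) = l * P f.
Proof. by case. Qed.

Lemma coh_sadd (R : realType) (T : finType) (P : (T -> R) -> R) :
  coherent P -> forall f g, P f + P g <= P (fun x => f x + g x).
Proof. by case. Qed.

Lemma coh0 (R : realType) (T : finType) (P : (T -> R) -> R) :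
  coherent P -> P (fun _ => 0) = 0.
Proof.
move=> cP; have h := coh_hom cP (fun _ => 0) (lexx 0).
rewrite -[RHS](mul0r (P (fun _ => 0))) -h; apply: coh_ext => x; by rewrite mul0r.
Qed.

Lemma coh_mono (R : realType) (T : finType) (P : (T -> R) -> R) :
  coherent P -> forall f g, (forall x, f x <= g x) -> P f <= P g.
Proof.
move=> cP f g fg.
have := coh_sadd cP f (fun x => g x - f x).
have -> : P (fun x => f x + (g x - f x)) = P g.
  by apply: coh_ext => x; rewrite addrC subrK.
have [x hx] := coh_min cP (fun x => g x - f x).
have : 0 <= g x - f x by rewrite subr_ge0.
lra.
Qed.

Lemma fin_min (R : realType) (T : finType) (x0 : T) (f : T -> R) :
  exists y, forall x, f y <= f x.
Proof.
by case: (@arg_minP _ R T x0 xpredT f isT) => y _ h; exists y => x; exact: (h x isT).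
Qed.

Lemma sum1_elem (R : realType) (T : finType) (p : T -> R) :
  \sum_x p x = 1 -> exists x : T, true.
Proof.
move=> h; apply: boolp.contrapT => hn.
have e : \sum_x p x = 0 by rewrite big1 // => x; case: hn; exists x.
by move: h; rewrite e => /eqP; rewrite eq_sym oner_eq0.
Qed.

Lemma lin_ge (R : realType) (T : finType) (p f : T -> R) c :
  (forall x, 0 <= p x) -> \sum_x p x = 1 -> (forall x, c <= f x) -> c <= lin p f.
Proof.
move=> p0 p1 cf; rewrite -[c]mul1r -p1 mulr_suml /lin.
by apply: ler_sum => x _; apply: ler_wpM2l.
Qed.

Lemma coh_lin (R : realType) (T : finType) (p : T -> R) :
  (forall x, 0 <= p x) -> \sum_x p x = 1 -> coherent (lin p).
Proof.
move=> p0 p1; split.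
- move=> f; have [x0 _] := sum1_elem p1.
  have [y hy] := fin_min x0 f; exists y; exact: lin_ge.
- by move=> l f _; rewrite linZ.
- by move=> f g; rewrite linD.
Qed.


Lemma up_ext (R : realType) (T : finType) (P : (T -> R) -> R) f g :
  (forall x, f x = g x) -> upper P f = upper P g.
Proof. by move=> fg; rewrite /upper; congr (- _); apply: coh_ext => x; rewrite fg. Qed.

Lemma up_sub (R : realType) (T : finType) (P : (T -> R) -> R) :
  coherent P -> forall v w, upper P (fun x => v x + w x) <= upper P v + upper P w.
Proof.
move=> cP v w; rewrite /upper.
have := coh_sadd cP (fun x => - v x) (fun x => - w x).
have -> : P (fun x => - v x + - w x) = P (fun x => - (v x + w x)).
  by apply: coh_ext => x; rewrite opprD.
lra.
Qed.

Lemma up_hom (R : realType) (T : finType) (P : (T -> R) -> R) :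
  coherent P -> forall l v, 0 <= l -> upper P (fun x => l * v x) = l * upper P v.
Proof.
move=> cP l v l0; rewrite /upper.
have -> : P (fun x => - (l * v x)) = P (fun x => l * (- v x)).
  by apply: coh_ext => x; rewrite mulrN.
by rewrite coh_hom // mulrN.
Qed.

Lemma up0 (R : realType) (T : finType) (P : (T -> R) -> R) :
  coherent P -> upper P (fun _ => 0) = 0.
Proof.
move=> cP; rewrite /upper.
have -> : P (fun x => - 0) = P (fun _ => 0) by apply: coh_ext => x; rewrite oppr0.
by rewrite coh0 // oppr0.
Qed.

Definition Ut (R : realType) (T : finType) (P : (T -> R) -> R) (h0 v : T -> R) : R :=
  inf [set r | exists t, 0 <= t /\ r = upper P (fun x => v x + t * h0 x) - t * upper P h0].

Lemma Ut_lb (R : realType) (T : finType) (P : (T -> R) -> R) h0 v t :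
  coherent P -> 0 <= t ->
  - upper P (fun x => - v x) <= upper P (fun x => v x + t * h0 x) - t * upper P h0.
Proof.
move=> cP t0.
have := up_sub cP (fun x => v x + t * h0 x) (fun x => - v x).
have -> : upper P (fun x => v x + t * h0 x + - v x) = upper P (fun x => t * h0 x).
  by apply: up_ext => x; rewrite addrC addKr.
rewrite up_hom //; lra.
Qed.

Lemma Ut_ext (R : realType) (T : finType) (P : (T -> R) -> R) h0 v w :
  (forall x, v x = w x) -> Ut P h0 v = Ut P h0 w.
Proof. by move=> vw; congr (Ut _ _ _); apply: boolp.funext. Qed.

Lemma Ut_le_el (R : realType) (T : finType) (P : (T -> R) -> R) h0 v t :
  coherent P -> 0 <= t ->
  Ut P h0 v <= upper P (fun x => v x + t * h0 x) - t * upper P h0.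
Proof.
move=> cP t0; apply: (inf_le_el (y := - upper P (fun x => - v x))).
  by move=> r [s [s0 ->]]; apply: Ut_lb.
by exists t.
Qed.

Lemma Ut_ge (R : realType) (T : finType) (P : (T -> R) -> R) h0 v c :
  coherent P ->
  (forall t, 0 <= t -> c <= upper P (fun x => v x + t * h0 x) - t * upper P h0) ->
  c <= Ut P h0 v.
Proof.
move=> cP h; apply: le_inf_el.
  by exists (upper P (fun x => v x + 0 * h0 x) - 0 * upper P h0); exists 0.
by move=> r [t [t0 ->]]; apply: h.
Qed.

Lemma Ut_lbound (R : realType) (T : finType) (P : (T -> R) -> R) h0 v :
  coherent P -> - upper P (fun x => - v x) <= Ut P h0 v.
Proof. by move=> cP; apply: Ut_ge => // t t0; apply: Ut_lb. Qed.

Lemma Ut_le_up (R : realType) (T : finType) (P : (T -> R) -> R) h0 v :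
  coherent P -> Ut P h0 v <= upper P v.
Proof.
move=> cP; have := Ut_le_el h0 v cP (lexx 0).
have -> : upper P (fun x => v x + 0 * h0 x) = upper P v.
  by apply: up_ext => x; rewrite mul0r addr0.
by rewrite mul0r subr0.
Qed.

Lemma Ut_h0 (R : realType) (T : finType) (P : (T -> R) -> R) h0 :
  coherent P -> Ut P h0 (fun x => - h0 x) <= - upper P h0.
Proof.
move=> cP; have := Ut_le_el h0 (fun x => - h0 x) cP ler01.
have -> : upper P (fun x => - h0 x + 1 * h0 x) = upper P (fun _ => 0).
  by apply: up_ext => x; rewrite mul1r addNr.
by rewrite up0 // mul1r sub0r.
Qed.

Lemma Ut_sub (R : realType) (T : finType) (P : (T -> R) -> R) h0 v w :
  coherent P -> Ut P h0 (fun x => v x + w x) <= Ut P h0 v + Ut P h0 w.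
Proof.
move=> cP.
have key : forall t s, 0 <= t -> 0 <= s -> Ut P h0 (fun x => v x + w x) <=
   (upper P (fun x => v x + t * h0 x) - t * upper P h0) +
   (upper P (fun x => w x + s * h0 x) - s * upper P h0).
  move=> t s t0 s0.
  have h1 := Ut_le_el h0 (fun x => v x + w x) cP (addr_ge0 t0 s0).
  have h2 := up_sub cP (fun x => v x + t * h0 x) (fun x => w x + s * h0 x).
  have e : upper P (fun x => v x + t * h0 x + (w x + s * h0 x)) =
     upper P (fun x => v x + w x + (t + s) * h0 x).
    by apply: up_ext => x; rewrite mulrDl; lra.
  rewrite e in h2; lra.
have h3 : forall s, 0 <= s -> Ut P h0 (fun x => v x + w x) -
   (upper P (fun x => w x + s * h0 x) - s * upper P h0) <= Ut P h0 v.
  move=> s s0; apply: Ut_ge => // t t0; have := key t s t0 s0; lra.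
have : Ut P h0 (fun x => v x + w x) - Ut P h0 v <= Ut P h0 w.
  apply: Ut_ge => // s s0; have := h3 s s0; lra.
lra.
Qed.

Lemma Ut_hom (R : realType) (T : finType) (P : (T -> R) -> R) h0 v l :
  coherent P -> 0 < l -> Ut P h0 (fun x => l * v x) = l * Ut P h0 v.
Proof.
move=> cP l0; apply/eqP; rewrite eq_le; apply/andP; split.
- rewrite -ler_pdivrMl //; apply: Ut_ge => // t t0.
  rewrite ler_pdivrMl //.
  have := Ut_le_el h0 (fun x => l * v x) cP (mulr_ge0 (ltW l0) t0).
  have -> : upper P (fun x => l * v x + l * t * h0 x) =
     upper P (fun x => l * (v x + t * h0 x)).
    by apply: up_ext => x; rewrite mulrDr mulrA.
  rewrite up_hom ?(ltW l0) //; lra.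
- apply: Ut_ge => // t t0.
  have tl0 : 0 <= t / l by rewrite divr_ge0 // ltW.
  have := Ut_le_el h0 v cP tl0.
  have ln0 : l != 0 by rewrite gt_eqF.
  rewrite -(ler_pM2l l0) mulrBr.
  have -> : l * upper P (fun x => v x + t / l * h0 x) =
     upper P (fun x => l * v x + t * h0 x).
    rewrite -up_hom ?(ltW l0) //; apply: up_ext => x; by field.
  have -> : l * (t / l * upper P h0) = t * upper P h0 by field.
  by [].
Qed.


Lemma hb_seq (R : realType) (T : finType) (P : (T -> R) -> R) (h0 : T -> R) :
  coherent P -> forall s : seq T, uniq s ->
  exists pi : T -> R, forall v, (forall x, x \notin s -> v x = 0) ->
     lin pi v <= Ut P h0 v.
Proof.
move=> cP; elim => [|e s IH] /=.
  move=> _; exists (fun _ => 0) => v hv.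
  have -> : lin (fun _ => 0) v = 0 by rewrite /lin big1 // => x _; rewrite mul0r.
  apply: le_trans (Ut_lbound h0 v cP).
  rewrite (up_ext P (g := fun _ => 0)) ?up0 ?oppr0 // => x.
  by rewrite hv // oppr0.
case/andP => es us; have [pi hpi] := IH us.
pose D (d : T -> R) := forall x, x \notin s -> d x = 0.
have Dadd : forall d1 d2, D d1 -> D d2 -> D (fun x => d1 x + d2 x).
  by move=> d1 d2 h1 h2 x xs; rewrite h1 // h2 // addr0.
have Dsc : forall d c, D d -> D (fun x => d x * c).
  by move=> d c h x xs; rewrite h // mul0r.
have key : forall d1 d2, D d1 -> D d2 ->
  lin pi d1 - Ut P h0 (fun x => d1 x - ind e x) <=
  Ut P h0 (fun x => d2 x + ind e x) - lin pi d2.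
  move=> d1 d2 h1 h2.
  have := hpi _ (Dadd _ _ h1 h2); rewrite linD.
  have := Ut_sub h0 (fun x => d1 x - ind e x) (fun x => d2 x + ind e x) cP.
  rewrite (Ut_ext P h0 (w := fun x => d1 x + d2 x)) => [|x]; last by lra.
  lra.
have D0 : D (fun _ => 0) by [].
pose A := [set r | exists d, D d /\ r = lin pi d - Ut P h0 (fun x => d x - ind e x)].
pose c := sup A.
have hA : forall d, D d -> lin pi d - Ut P h0 (fun x => d x - ind e x) <= c.
  move=> d hd; apply: (le_sup_el (y := Ut P h0 (fun x => 0 + ind e x) - lin pi (fun _ => 0))).
    by move=> r [d1 [h1 ->]]; apply: key.
  by exists d.
have hB : forall d, D d -> c <= Ut P h0 (fun x => d x + ind e x) - lin pi d.
  move=> d hd; apply: sup_le_el.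
    by exists (lin pi (fun _ => 0) - Ut P h0 (fun x => 0 - ind e x)), (fun _ => 0).
  by move=> r [d1 [h1 ->]]; apply: key.
exists (fun x => if x == e then c else pi x) => v hv.
pose d := fun x => if x == e then 0 else v x.
pose t := v e.
have hd : D d.
  move=> x xs; rewrite /d; case: eqP => // xe; apply: hv.
  by rewrite in_cons negb_or xs andbT; apply/eqP.
have vE : forall x, v x = d x + t * ind e x.
  move=> x; rewrite /d /t /ind; case: eqP => [->|]; first by rewrite mulr1 add0r.
  by rewrite mulr0 addr0.
have linE : lin (fun x => if x == e then c else pi x) v = lin pi d + t * c.
  rewrite (lin_ext _ vE) linD linZ lin_ind eqxx; congr (_ + _).
  by apply: eq_bigr => x _; rewrite /d; case: eqP => // _; rewrite !mulr0.
rewrite linE (Ut_ext P h0 vE).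
have [t0|t0|t0] := ltrgtP t 0.
- pose s0 := - t.
  have s00 : 0 < s0 by rewrite /s0 oppr_gt0.
  have := hA _ (Dsc d (s0^-1) hd).
  rewrite -(ler_pM2l s00) mulrBr.
  have -> : s0 * lin pi (fun x => d x * s0^-1) = lin pi d.
    by rewrite (lin_ext _ (g := fun x => s0^-1 * d x)) ?linZ ?mulrA ?divff ?mul1r ?gt_eqF // => x; rewrite mulrC.
  rewrite -Ut_hom //.
  rewrite (Ut_ext P h0 (w := fun x => d x + t * ind e x)) => [|x]; last first.
    rewrite /s0; field; by rewrite ?oppr_eq0 lt_eqF.
  rewrite /s0; lra.
- have := hB _ (Dsc d (t^-1) hd).
  rewrite -(ler_pM2l t0) mulrBr.
  have -> : t * lin pi (fun x => d x * t^-1) = lin pi d.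
    by rewrite (lin_ext _ (g := fun x => t^-1 * d x)) ?linZ ?mulrA ?divff ?mul1r ?gt_eqF // => x; rewrite mulrC.
  rewrite -Ut_hom //.
  rewrite (Ut_ext P h0 (w := fun x => d x + t * ind e x)) => [|x]; last first.
    field; by rewrite gt_eqF.
  lra.
- rewrite t0 mul0r addr0.
  rewrite (Ut_ext P h0 (w := d)) => [|x]; last by rewrite mul0r addr0.
  exact: hpi.
Qed.

Lemma envelope (R : realType) (T : finType) (P : (T -> R) -> R) (g : T -> R) :
  coherent P -> exists pi : T -> R, (forall f, P f <= lin pi f) /\ lin pi g = P g.
Proof.
move=> cP; pose h0 := fun x => - g x.
have [pi hpi] := hb_seq h0 cP (enum_uniq T).
have hpi' : forall v, lin pi v <= upper P v.
  move=> v; apply: le_trans (Ut_le_up h0 v cP); apply: hpi => x.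
  by rewrite mem_enum.
have dom : forall f, P f <= lin pi f.
  move=> f; have := hpi' (fun x => - f x); rewrite linN /upper.
  rewrite (coh_ext P (g := f)) => [|x]; last by rewrite opprK.
  lra.
exists pi; split => //; apply/eqP; rewrite eq_le dom andbT.
have h1 : lin pi (fun x => - h0 x) <= Ut P h0 (fun x => - h0 x).
  by apply: hpi => x; rewrite mem_enum.
have := le_trans h1 (Ut_h0 h0 cP).
have -> : lin pi (fun x => - h0 x) = lin pi g by apply: lin_ext => x; rewrite opprK.
have -> : upper P h0 = - P g.
  by rewrite /upper; congr (- _); apply: coh_ext => x; rewrite /h0 opprK.
by rewrite opprK.
Qed.


Lemma dom_ge0 (R : realType) (T : finType) (P : (T -> R) -> R) (pi : T -> R) :
  coherent P -> (forall f, P f <= lin pi f) -> forall x, 0 <= pi x.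
Proof.
move=> cP hd x; have := hd (ind x); rewrite lin_ind; apply: le_trans.
have [y hy] := coh_min cP (ind x); apply: le_trans hy.
by rewrite /ind ler0n.
Qed.

Lemma dom_sum1 (R : realType) (T : finType) (P : (T -> R) -> R) (pi : T -> R) :
  coherent P -> (forall f, P f <= lin pi f) -> \sum_x pi x = 1.
Proof.
move=> cP hd; have h1 := hd (fun _ => 1); have h2 := hd (fun _ => -1).
rewrite lin_const mul1r in h1; rewrite lin_const mulN1r in h2.
have [y1 hy1] := coh_min cP (fun _ => 1).
have [y2 hy2] := coh_min cP (fun _ => -1).
simpl in hy1, hy2; lra.
Qed.

Definition infP (R : realType) (T : finType) (F : ((T -> R) -> R) -> Prop) (f : T -> R) : R :=
  inf [set r | exists E, F E /\ r = E f].

Lemma infP_lbound (R : realType) (T : finType) (F : ((T -> R) -> R) -> Prop) f :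
  (exists E, F E) -> (forall E, F E -> coherent E) ->
  exists m, forall E, F E -> m <= E f.
Proof.
move=> [E0 h0] hc; have [x0 _] := coh_min (hc _ h0) f.
have [y hy] := fin_min x0 f; exists (f y) => E hE.
have [z hz] := coh_min (hc _ hE) f; exact: le_trans (hy z) hz.
Qed.

Lemma infP_le (R : realType) (T : finType) (F : ((T -> R) -> R) -> Prop) f E :
  (forall E, F E -> coherent E) -> F E -> infP F f <= E f.
Proof.
move=> hc hE; have [m hm] := infP_lbound f (ex_intro _ E hE) hc.
apply: (inf_le_el (y := m)); first by move=> r [E' [h ->]]; apply: hm.
by exists E.
Qed.

Lemma infP_ge (R : realType) (T : finType) (F : ((T -> R) -> R) -> Prop) f c :
  (exists E, F E) -> (forall E, F E -> c <= E f) -> c <= infP F f.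
Proof.
move=> [E0 h0] hc; apply: le_inf_el; first by exists (E0 f), E0.
by move=> r [E [h ->]]; apply: hc.
Qed.

Lemma infP_coh (R : realType) (T : finType) (F : ((T -> R) -> R) -> Prop) :
  (exists E, F E) -> (forall E, F E -> coherent E) -> coherent (infP F).
Proof.
move=> ne hc; split.
- move=> f; have [E0 h0] := ne; have [x0 _] := coh_min (hc _ h0) f.
  have [y hy] := fin_min x0 f; exists y; apply: infP_ge => // E hE.
  have [z hz] := coh_min (hc _ hE) f; exact: le_trans (hy z) hz.
- move=> l f; rewrite le0r => /orP[/eqP ->|l0].
  + have [E0 h0] := ne; rewrite mul0r; apply/eqP; rewrite eq_le; apply/andP; split.
    * apply: le_trans (infP_le _ hc h0) _.
      by rewrite (coh_hom (hc _ h0)) // mul0r.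
    * by apply: infP_ge => // E hE; rewrite (coh_hom (hc _ hE)) // mul0r.
  + apply/eqP; rewrite eq_le; apply/andP; split.
    * rewrite -ler_pdivrMl //; apply: infP_ge => // E hE.
      rewrite ler_pdivrMl // -(coh_hom (hc _ hE) _ (ltW l0)).
      exact: infP_le.
    * apply: infP_ge => // E hE; rewrite (coh_hom (hc _ hE) _ (ltW l0)).
      by rewrite ler_pM2l //; apply: infP_le.
- move=> f g; apply: infP_ge => // E hE.
  apply: le_trans (coh_sadd (hc _ hE) f g).
  by apply: lerD; apply: infP_le.
Qed.


Definition prodw (R : realType) (A B : finType) (p1 : A -> R) (p2 : B -> R) :
  (A * B)%type -> R := fun w => p1 w.1 * p2 w.2.

Definition SP (R : realType) (A B : finType) (P1 : (A -> R) -> R) (P2 : (B -> R) -> R)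
  (E : ((A * B)%type -> R) -> R) : Prop :=
  exists p1 p2, (forall f, P1 f <= lin p1 f) /\ (forall f, P2 f <= lin p2 f) /\
     E = lin (prodw p1 p2).

Lemma sum_pair (R : realType) (A B : finType) (F : (A * B)%type -> R) :
  \sum_w F w = \sum_a \sum_b F (a, b).
Proof. by rewrite pair_big; apply: eq_bigr => -[a b]. Qed.

Lemma prodw_ge0 (R : realType) (A B : finType) (p1 : A -> R) (p2 : B -> R) :
  (forall a, 0 <= p1 a) -> (forall b, 0 <= p2 b) -> forall w, 0 <= prodw p1 p2 w.
Proof. by move=> h1 h2 w; rewrite /prodw mulr_ge0. Qed.

Lemma prodw_sum (R : realType) (A B : finType) (p1 : A -> R) (p2 : B -> R) :
  \sum_a p1 a = 1 -> \sum_b p2 b = 1 -> \sum_w prodw p1 p2 w = 1.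
Proof.
move=> h1 h2; rewrite sum_pair -h1; apply: eq_bigr => a _.
by rewrite /prodw /= -mulr_sumr h2 mulr1.
Qed.

Lemma marg1 (R : realType) (A B : finType) (p1 : A -> R) (p2 : B -> R) g :
  \sum_b p2 b = 1 -> lin (prodw p1 p2) (fun w => g w.1) = lin p1 g.
Proof.
move=> h2; rewrite /lin sum_pair; apply: eq_bigr => a _ /=.
have -> : \sum_b prodw p1 p2 (a, b) * g (a, b).1 = (p1 a * g a) * \sum_b p2 b.
  rewrite mulr_sumr; apply: eq_bigr => b _; rewrite /prodw /=; ring.
by rewrite h2 mulr1.
Qed.

Lemma marg2 (R : realType) (A B : finType) (p1 : A -> R) (p2 : B -> R) h :
  \sum_a p1 a = 1 -> lin (prodw p1 p2) (fun w => h w.2) = lin p2 h.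
Proof.
move=> h1; rewrite /lin sum_pair exchange_big /=; apply: eq_bigr => b _ /=.
have -> : \sum_a prodw p1 p2 (a, b) * h (a, b).2 = (p2 b * h b) * \sum_a p1 a.
  rewrite mulr_sumr; apply: eq_bigr => a _; rewrite /prodw /=; ring.
by rewrite h1 mulr1.
Qed.

Lemma SP_ne (R : realType) (A B : finType) (P1 : (A -> R) -> R) (P2 : (B -> R) -> R) :
  coherent P1 -> coherent P2 -> exists E, SP P1 P2 E.
Proof.
move=> c1 c2; have [p1 [h1 _]] := envelope (fun _ => 0) c1.
have [p2 [h2 _]] := envelope (fun _ => 0) c2.
by exists (lin (prodw p1 p2)), p1, p2.
Qed.

Lemma SP_coh (R : realType) (A B : finType) (P1 : (A -> R) -> R) (P2 : (B -> R) -> R) :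
  coherent P1 -> coherent P2 -> forall E, SP P1 P2 E -> coherent E.
Proof.
move=> c1 c2 E [p1 [p2 [h1 [h2 ->]]]]; apply: coh_lin.
  by apply: prodw_ge0; [apply: (dom_ge0 c1 h1)|apply: (dom_ge0 c2 h2)].
by apply: prodw_sum; [apply: (dom_sum1 c1 h1)|apply: (dom_sum1 c2 h2)].
Qed.

Lemma SP_marg1 (R : realType) (A B : finType) (P1 : (A -> R) -> R) (P2 : (B -> R) -> R) g :
  coherent P1 -> coherent P2 -> infP (SP P1 P2) (fun w => g w.1) = P1 g.
Proof.
move=> c1 c2; apply/eqP; rewrite eq_le; apply/andP; split.
- have [p1 [h1 e1]] := envelope g c1.
  have [p2 [h2 _]] := envelope (fun _ => 0) c2.
  have hs : SP P1 P2 (lin (prodw p1 p2)) by exists p1, p2.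
  apply: le_trans (infP_le _ (SP_coh c1 c2) hs) _.
  by rewrite marg1 ?e1 // (dom_sum1 c2 h2).
- apply: infP_ge; first exact: SP_ne.
  move=> E [p1 [p2 [h1 [h2 ->]]]].
  by rewrite marg1 ?(dom_sum1 c2 h2).
Qed.

Lemma SP_marg2 (R : realType) (A B : finType) (P1 : (A -> R) -> R) (P2 : (B -> R) -> R) h :
  coherent P1 -> coherent P2 -> infP (SP P1 P2) (fun w => h w.2) = P2 h.
Proof.
move=> c1 c2; apply/eqP; rewrite eq_le; apply/andP; split.
- have [p2 [h2 e2]] := envelope h c2.
  have [p1 [h1 _]] := envelope (fun _ => 0) c1.
  have hs : SP P1 P2 (lin (prodw p1 p2)) by exists p1, p2.
  apply: le_trans (infP_le _ (SP_coh c1 c2) hs) _.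
  by rewrite marg2 ?e2 // (dom_sum1 c1 h1).
- apply: infP_ge; first exact: SP_ne.
  move=> E [p1 [p2 [h1 [h2 ->]]]].
  by rewrite marg2 ?(dom_sum1 c1 h1).
Qed.


Lemma exists_nonneg (R : realType) (T : finType) (q V : T -> R) (Sx : T -> Prop) :
  (forall w, 0 <= q w) -> 0 <= \sum_w q w * V w -> (exists w0, Sx w0 /\ 0 < q w0) ->
  (forall w, ~ Sx w -> V w = 0) -> exists w, Sx w /\ 0 <= V w.
Proof.
move=> q0 hs [w0 [s0 qw0]] hz; apply: boolp.contrapT => hn.
have neg : forall w, Sx w -> V w < 0.
  move=> w sw; rewrite ltNge; apply/negP => h; apply: hn; by exists w.
have : \sum_w q w * V w < 0.
  rewrite (bigD1 w0) //=.
  have t0 : q w0 * V w0 < 0 by rewrite pmulr_rlt0 // neg.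
  have r0 : \sum_(w | w != w0) q w * V w <= 0.
    apply: sumr_le0 => w _; case: (boolp.pselect (Sx w)) => [sw|nsw].
      by apply: mulr_ge0_le0 => //; apply: ltW; apply: neg.
    by rewrite hz // mulr0.
  lra.
lra.
Qed.

Lemma pos_elem (R : realType) (T : finType) (q : T -> R) :
  (forall w, 0 <= q w) -> \sum_w q w = 1 -> exists w, 0 < q w.
Proof.
move=> q0 q1; apply: boolp.contrapT => hn.
have : \sum_w q w = 0.
  apply: big1 => w _; apply/eqP; rewrite eq_le q0 andbT leNgt; apply/negP => h.
  by apply: hn; exists w.
by rewrite q1 => /eqP; rewrite oner_eq0.
Qed.

Definition C0 (R : realType) (A B : finType) (p1 : A -> R) (p2 : B -> R)
  (g : (A * B)%type -> R) (w : (A * B)%type) : R := g w - lin (prodw p1 p2) g.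
Definition C1 (R : realType) (A B : finType) (p1 : A -> R)
  (g : (A * B)%type -> R) (w : (A * B)%type) : R := g w - lin p1 (fun a => g (a, w.2)).
Definition C2 (R : realType) (A B : finType) (p2 : B -> R)
  (g : (A * B)%type -> R) (w : (A * B)%type) : R := g w - lin p2 (fun b => g (w.1, b)).

Lemma E0 (R : realType) (A B : finType) (p1 : A -> R) (p2 : B -> R) g :
  \sum_w prodw p1 p2 w = 1 -> \sum_w prodw p1 p2 w * C0 p1 p2 g w = 0.
Proof.
move=> hs; rewrite /C0.
have e : forall w, prodw p1 p2 w * (g w - lin (prodw p1 p2) g) =
   prodw p1 p2 w * g w - lin (prodw p1 p2) g * prodw p1 p2 w by move=> w; ring.
by rewrite (eq_bigr _ (fun w _ => e w)) sumrB -mulr_sumr hs mulr1 subrr.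
Qed.

Lemma sum_lin_gain (R : realType) (T : finType) (p : T -> R) (c X : R) (G : T -> R) :
  \sum_a p a = 1 -> lin p G = X -> \sum_a p a * c * (G a - X) = 0.
Proof.
move=> h1 hl.
have e : forall a, p a * c * (G a - X) = c * (p a * G a) - (c * X) * p a by move=> a; ring.
rewrite (eq_bigr _ (fun a _ => e a)) sumrB -!mulr_sumr h1 -/(lin p G) hl; ring.
Qed.

Lemma E1 (R : realType) (A B : finType) (p1 : A -> R) (r : B -> R) g :
  \sum_a p1 a = 1 -> \sum_w p1 w.1 * r w.2 * C1 p1 g w = 0.
Proof.
move=> h1; rewrite sum_pair exchange_big /=; apply: big1 => b _.
rewrite /C1 /=; exact: (@sum_lin_gain R A p1 (r b) _ (fun a => g (a, b)) h1 erefl).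
Qed.

Lemma sum_lin_gain' (R : realType) (T : finType) (p : T -> R) (c X : R) (G : T -> R) :
  \sum_a p a = 1 -> lin p G = X -> \sum_a c * p a * (G a - X) = 0.
Proof.
move=> h1 hl; rewrite -[RHS](sum_lin_gain c h1 hl); apply: eq_bigr => a _; ring.
Qed.

Lemma E2 (R : realType) (A B : finType) (r : A -> R) (p2 : B -> R) g :
  \sum_b p2 b = 1 -> \sum_w r w.1 * p2 w.2 * C2 p2 g w = 0.
Proof.
move=> h2; rewrite sum_pair /=; apply: big1 => a _.
rewrite /C2 /=; exact: (@sum_lin_gain' R B p2 (r a) _ (fun b => g (a, b)) h2 erefl).
Qed.


Lemma C0_z (R : realType) (A B : finType) (p1 : A -> R) (p2 : B -> R) g w :
  (forall w', g w' = 0) -> C0 p1 p2 g w = 0.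
Proof.
move=> h; rewrite /C0 h.
have -> : lin (prodw p1 p2) g = lin (prodw p1 p2) (fun _ => 0) by apply: lin_ext.
by rewrite lin0 subrr.
Qed.

Lemma C1_z (R : realType) (A B : finType) (p1 : A -> R) g (w : (A * B)%type) :
  (forall a, g (a, w.2) = 0) -> C1 p1 g w = 0.
Proof.
case: w => a b /= h; rewrite /C1 /= h.
have -> : lin p1 (fun a => g (a, b)) = lin p1 (fun _ => 0) by apply: lin_ext.
by rewrite lin0 subrr.
Qed.

Lemma C2_z (R : realType) (A B : finType) (p2 : B -> R) g (w : (A * B)%type) :
  (forall b, g (w.1, b) = 0) -> C2 p2 g w = 0.
Proof.
case: w => a b /= h; rewrite /C2 /= h.
have -> : lin p2 (fun b => g (a, b)) = lin p2 (fun _ => 0) by apply: lin_ext.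
by rewrite lin0 subrr.
Qed.

Lemma sum4 (R : realType) (T : finType) (q a b c d : T -> R) :
  \sum_w q w * (a w + b w + c w - d w) =
  \sum_w q w * a w + \sum_w q w * b w + \sum_w q w * c w - \sum_w q w * d w.
Proof.
rewrite -!big_split -sumrB /=; apply: eq_bigr => w _; ring.
Qed.

Lemma lin_case0 (R : realType) (A B : finType) (p1 : A -> R) (p2 : B -> R)
  (h10 : forall a, 0 <= p1 a) (h11 : \sum_a p1 a = 1)
  (h20 : forall b, 0 <= p2 b) (h21 : \sum_b p2 b = 1) g0 g1 g2 f0 :
  exists w, 0 <= C0 p1 p2 g0 w + C1 p1 g1 w + C2 p2 g2 w - C0 p1 p2 f0 w.
Proof.
have q0 := prodw_ge0 h10 h20; have q1 := prodw_sum h11 h21.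
have [w0 hw0] := pos_elem q0 q1.
have hs : 0 <= \sum_w prodw p1 p2 w *
   (C0 p1 p2 g0 w + C1 p1 g1 w + C2 p2 g2 w - C0 p1 p2 f0 w).
  rewrite sum4 !E0 // (E1 p2 g1 h11) (E2 p1 g2 h21); lra.
have [w [_ hw]] := @exists_nonneg R _ (prodw p1 p2)
  (fun w => C0 p1 p2 g0 w + C1 p1 g1 w + C2 p2 g2 w - C0 p1 p2 f0 w)
  (fun _ => True) q0 hs (ex_intro _ w0 (conj I hw0)) (fun w h => False_ind _ (h I)).
by exists w.
Qed.

Lemma lin_case1 (R : realType) (A B : finType) (p1 : A -> R) (p2 : B -> R)
  (h10 : forall a, 0 <= p1 a) (h11 : \sum_a p1 a = 1)
  (h20 : forall b, 0 <= p2 b) (h21 : \sum_b p2 b = 1) (b0 : B)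
  (Sx : (A * B)%type -> Prop) g0 g1 g2 f0 :
  (forall w, w.2 = b0 -> Sx w) ->
  (forall w, ~ Sx w -> (forall w', g0 w' = 0) /\ (forall a, g1 (a, w.2) = 0) /\
                        (forall b, g2 (w.1, b) = 0)) ->
  exists w, Sx w /\ 0 <= C0 p1 p2 g0 w + C1 p1 g1 w + C2 p2 g2 w -
                         (if w.2 == b0 then C1 p1 f0 w else 0).
Proof.
move=> hB hz.
have q0 := prodw_ge0 h10 h20; have q1 := prodw_sum h11 h21.
have Tz : forall w, ~ Sx w -> C0 p1 p2 g0 w + C1 p1 g1 w + C2 p2 g2 w -
                         (if w.2 == b0 then C1 p1 f0 w else 0) = 0.
  move=> w nw; have [z0 [z1 z2]] := hz w nw.
  rewrite C0_z // C1_z // C2_z //; case: eqP => [e|_]; last by lra.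
  by case: nw; apply: hB.
have eK : forall w, prodw p1 p2 w * (if w.2 == b0 then C1 p1 f0 w else 0) =
    p1 w.1 * (if w.2 == b0 then p2 w.2 else 0) * C1 p1 f0 w.
  by move=> w; rewrite /prodw; case: eqP => _; ring.
have [a1 ha1] := pos_elem h10 h11.
case: (boolp.pselect (exists w0, Sx w0 /\ 0 < prodw p1 p2 w0)) => [hex|hnex].
  apply: (@exists_nonneg R _ (prodw p1 p2)) => //.
  rewrite sum4 !E0 // (E1 p2 g1 h11) (E2 p1 g2 h21) (eq_bigr _ (fun w _ => eK w)).
  rewrite (E1 (fun b => if b == b0 then p2 b else 0) f0 h11); lra.
have hpos : forall w, Sx w -> prodw p1 p2 w <= 0.
  move=> w sw; rewrite leNgt; apply/negP => h; apply: hnex; by exists w.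
have g0z : forall w', g0 w' = 0.
  move=> w'; apply: boolp.contrapT => hg.
  have [b1 hb1] := pos_elem h20 h21.
  have : Sx (a1, b1).
    apply: boolp.contrapT => ns; by have [z0 _] := hz _ ns; apply: hg.
  move/hpos; rewrite /prodw /=; rewrite leNgt => /negP; apply.
  exact: mulr_gt0.
pose q := fun w : (A * B)%type => p1 w.1 * (if w.2 == b0 then 1 else 0).
have q0' : forall w, 0 <= q w by move=> w; rewrite /q; case: eqP; rewrite ?mulr1 ?mulr0.
apply: (@exists_nonneg R _ q) => //; last first.
  by exists (a1, b0); split; [apply: hB | rewrite /q /= eqxx mulr1].
rewrite sum4.
have -> : \sum_w q w * C0 p1 p2 g0 w = 0.
  by apply: big1 => w _; rewrite C0_z // mulr0.
have -> : \sum_w q w * C2 p2 g2 w = 0.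
  apply: big1 => w _; rewrite /q; case: (boolp.pselect (0 < p1 w.1)) => hp; last first.
    have -> : p1 w.1 = 0 by apply/eqP; rewrite eq_le h10 andbT leNgt; apply/negP.
    by rewrite !mul0r.
  case: (boolp.pselect (forall b, g2 (w.1, b) = 0)) => hg.
    by rewrite C2_z // mulr0.
  exfalso; move/boolp.existsNP: hg => [b hb].
  have p2z : forall b', p2 b' = 0.
    move=> b'; have : Sx (w.1, b').
      apply: boolp.contrapT => ns; have [_ [_ z2]] := hz _ ns; by apply: hb; apply: z2.
    move/hpos; rewrite /prodw /= => h.
    apply/eqP; rewrite eq_le h20 andbT.
    by rewrite -(pmulr_rle0 _ hp).
  move: h21; rewrite big1 // => /eqP; by rewrite eq_sym oner_eq0.
have -> : \sum_w q w * C1 p1 g1 w = 0 by exact: (E1 (fun b => if b == b0 then 1 else 0) g1 h11).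
have e2 : forall w, q w * (if w.2 == b0 then C1 p1 f0 w else 0) =
    p1 w.1 * (if w.2 == b0 then 1 else 0) * C1 p1 f0 w.
  by move=> w; rewrite /q; case: eqP => _; ring.
rewrite (eq_bigr _ (fun w _ => e2 w)) (E1 (fun b => if b == b0 then 1 else 0) f0 h11).
lra.
Qed.


Lemma lin_case2 (R : realType) (A B : finType) (p1 : A -> R) (p2 : B -> R)
  (h10 : forall a, 0 <= p1 a) (h11 : \sum_a p1 a = 1)
  (h20 : forall b, 0 <= p2 b) (h21 : \sum_b p2 b = 1) (a0 : A)
  (Sx : (A * B)%type -> Prop) g0 g1 g2 f0 :
  (forall w, w.1 = a0 -> Sx w) ->
  (forall w, ~ Sx w -> (forall w', g0 w' = 0) /\ (forall a, g1 (a, w.2) = 0) /\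
                        (forall b, g2 (w.1, b) = 0)) ->
  exists w, Sx w /\ 0 <= C0 p1 p2 g0 w + C1 p1 g1 w + C2 p2 g2 w -
                         (if w.1 == a0 then C2 p2 f0 w else 0).
Proof.
move=> hB hz.
have q0 := prodw_ge0 h10 h20; have q1 := prodw_sum h11 h21.
have Tz : forall w, ~ Sx w -> C0 p1 p2 g0 w + C1 p1 g1 w + C2 p2 g2 w -
                         (if w.1 == a0 then C2 p2 f0 w else 0) = 0.
  move=> w nw; have [z0 [z1 z2]] := hz w nw.
  rewrite C0_z // C1_z // C2_z //; case: eqP => [e|_]; last by lra.
  by case: nw; apply: hB.
have eK : forall w, prodw p1 p2 w * (if w.1 == a0 then C2 p2 f0 w else 0) =
    (if w.1 == a0 then p1 w.1 else 0) * p2 w.2 * C2 p2 f0 w.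
  by move=> w; rewrite /prodw; case: eqP => _; ring.
have [b1 hb1] := pos_elem h20 h21.
case: (boolp.pselect (exists w0, Sx w0 /\ 0 < prodw p1 p2 w0)) => [hex|hnex].
  apply: (@exists_nonneg R _ (prodw p1 p2)) => //.
  rewrite sum4 !E0 // (E1 p2 g1 h11) (E2 p1 g2 h21) (eq_bigr _ (fun w _ => eK w)).
  rewrite (E2 (fun a => if a == a0 then p1 a else 0) f0 h21); lra.
have hpos : forall w, Sx w -> prodw p1 p2 w <= 0.
  move=> w sw; rewrite leNgt; apply/negP => h; apply: hnex; by exists w.
have g0z : forall w', g0 w' = 0.
  move=> w'; apply: boolp.contrapT => hg.
  have [a1 ha1] := pos_elem h10 h11.
  have : Sx (a1, b1).
    apply: boolp.contrapT => ns; by have [z0 _] := hz _ ns; apply: hg.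
  move/hpos; rewrite /prodw /=; rewrite leNgt => /negP; apply.
  exact: mulr_gt0.
pose q := fun w : (A * B)%type => (if w.1 == a0 then 1 else 0) * p2 w.2.
have q0' : forall w, 0 <= q w by move=> w; rewrite /q; case: eqP; rewrite ?mul1r ?mul0r.
apply: (@exists_nonneg R _ q) => //; last first.
  by exists (a0, b1); split; [apply: hB | rewrite /q /= eqxx mul1r].
rewrite sum4.
have -> : \sum_w q w * C0 p1 p2 g0 w = 0.
  by apply: big1 => w _; rewrite C0_z // mulr0.
have -> : \sum_w q w * C1 p1 g1 w = 0.
  apply: big1 => w _; rewrite /q; case: (boolp.pselect (0 < p2 w.2)) => hp; last first.
    have -> : p2 w.2 = 0 by apply/eqP; rewrite eq_le h20 andbT leNgt; apply/negP.
    by rewrite !mulr0 mul0r.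
  case: (boolp.pselect (forall a, g1 (a, w.2) = 0)) => hg.
    by rewrite C1_z // mulr0.
  exfalso; move/boolp.existsNP: hg => [a ha].
  have p1z : forall a', p1 a' = 0.
    move=> a'; have : Sx (a', w.2).
      apply: boolp.contrapT => ns; have [_ [z1 _]] := hz _ ns; by apply: ha; apply: z1.
    move/hpos; rewrite /prodw /= => h.
    apply/eqP; rewrite eq_le h10 andbT.
    by rewrite -(pmulr_lle0 _ hp).
  move: h11; rewrite big1 // => /eqP; by rewrite eq_sym oner_eq0.
have -> : \sum_w q w * C2 p2 g2 w = 0 by exact: (E2 (fun a => if a == a0 then 1 else 0) g2 h21).
have e2 : forall w, q w * (if w.1 == a0 then C2 p2 f0 w else 0) =
    (if w.1 == a0 then 1 else 0) * p2 w.2 * C2 p2 f0 w.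
  by move=> w; rewrite /q; case: eqP => _; ring.
rewrite (eq_bigr _ (fun w _ => e2 w)) (E2 (fun a => if a == a0 then 1 else 0) f0 h21).
lra.
Qed.

Local Open Scope classical_set_scope.

Lemma delta_fin (R : realType) (T : finType) (Sx : T -> Prop) (V : T -> R) :
  (forall d, 0 < d -> exists w, Sx w /\ - d <= V w) -> exists w, Sx w /\ 0 <= V w.
Proof.
move=> hd; apply: boolp.contrapT => hn.
have neg : forall w, Sx w -> V w < 0.
  move=> w sw; rewrite ltNge; apply/negP => h; apply: hn; by exists w.
have [x0 _] := hd 1 ltr01.
pose phi := fun w => if boolp.pselect (Sx w) then - V w else 1.
have phi0 : forall w, 0 < phi w.
  by move=> w; rewrite /phi; case: boolp.pselect => // sw; rewrite oppr_gt0 neg.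
have [y hy] := fin_min x0 phi.
have [w [sw hw]] := hd (phi y / 2) (divr_gt0 (phi0 y) (ltr0Sn R 1)).
have ew : phi w = - V w.
  by rewrite /phi; case: (boolp.pselect (Sx w)) => // nsw; case: nsw.
have := hy w; rewrite ew.
have := phi0 y; have := neg w sw; lra.
Qed.

Lemma infP_adh (R : realType) (T : finType) (F : ((T -> R) -> R) -> Prop) f d :
  (exists E, F E) -> 0 < d -> exists E, F E /\ E f < infP F f + d.
Proof.
move=> [E0 h0] d0.
have ne : [set r | exists E, F E /\ r = E f] !=set0 by exists (E0 f), E0.
have := @inf_lt R _ (infP F f + d) ne; rewrite /infP ltrDl => /(_ d0) [r [E [hE ->]]] h.
by exists E.
Qed.

Definition msP (R : realType) (A B : finType) (P1 : (A -> R) -> R) (P2 : (B -> R) -> R)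
   (E : ((A * B)%type -> R) -> R) := (fun j : 'I_3 =>
        match val j with
        | 0 => @CModel R _ unitF (fun _ => tt) (fun _ => E)
        | 1 => @CModel R _ B (fun w => w.2) (fun b f => P1 (fun a => f (a, b)))
        | _ => @CModel R _ A (fun w => w.1) (fun a f => P2 (fun b => f (a, b)))
        end).

Lemma SP_jc (R : realType) (A B : finType) (P1 : (A -> R) -> R) (P2 : (B -> R) -> R) :
  coherent P1 -> coherent P2 -> jointly_coherent (msP P1 P2 (infP (SP P1 P2))).
Proof.
move=> c1 c2 fs j0 f0.
case: j0 => [[|[|[|m]]] hj] z0 //=.
- have ne := SP_ne c1 c2.
  apply: delta_fin => d d0.
  have [E' [[p1 [p2 [hd1 [hd2 eE]]]] hE']] := infP_adh f0 ne d0.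
  have p10 := dom_ge0 c1 hd1; have p11 := dom_sum1 c1 hd1.
  have p20 := dom_ge0 c2 hd2; have p21 := dom_sum1 c2 hd2.
  have [w hw] := lin_case0 p10 p11 p20 p21 (fs ord0) (fs (lift ord0 ord0))
     (fs (lift ord0 (lift ord0 ord0))) f0.
  exists w; split; first by left; case: z0.
  rewrite !big_ord_recl big_ord0 /cgain /=.
  rewrite eE in hE'.
  have hs : SP P1 P2 (lin (prodw p1 p2)) by exists p1, p2.
  have i0 := infP_le (fs ord0) (SP_coh c1 c2) hs.
  have i1 := hd1 (fun a => fs (lift ord0 ord0) (a, w.2)).
  have i2 := hd2 (fun b => fs (lift ord0 (lift ord0 ord0)) (w.1, b)).
  rewrite /C0 /C1 /C2 in hw; lra.
- have ne := SP_ne c1 c2.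
  apply: delta_fin => d d0.
  have [p1 [hd1 e1]] := envelope (fun a => f0 (a, z0)) c1.
  have [p2 [hd2 _]] := envelope (fun _ => 0) c2.
  have p10 := dom_ge0 c1 hd1; have p11 := dom_sum1 c1 hd1.
  have p20 := dom_ge0 c2 hd2; have p21 := dom_sum1 c2 hd2.
  pose Sx := (fun w => w.2 = z0 \/ (exists j : 'I_3, csupp (msP P1 P2 (infP (SP P1 P2)) j) (fs j) w)).
  have hz : forall w, ~ Sx w -> (forall w', fs ord0 w' = 0) /\
     (forall a, fs (lift ord0 ord0) (a, w.2) = 0) /\
     (forall b, fs (lift ord0 (lift ord0 ord0)) (w.1, b) = 0).
    move=> w nw; split; [|split].
    + move=> w'; apply: boolp.contrapT => h; apply: nw; right; exists ord0; by exists w'.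
    + move=> a; apply: boolp.contrapT => h; apply: nw; right; exists (lift ord0 ord0).
      by exists (a, w.2).
    + move=> b; apply: boolp.contrapT => h; apply: nw; right.
      exists (lift ord0 (lift ord0 ord0)); by exists (w.1, b).
  have [w [hs hw]] := @lin_case1 R A B p1 p2 p10 p11 p20 p21 z0 Sx
    (fs ord0) (fs (lift ord0 ord0)) (fs (lift ord0 (lift ord0 ord0))) f0
    (fun w h => or_introl h) hz.
  exists w; split => //.
  rewrite !big_ord_recl big_ord0 /cgain /=.
  have hs' : SP P1 P2 (lin (prodw p1 p2)) by exists p1, p2.
  have i0 := infP_le (fs ord0) (SP_coh c1 c2) hs'.
  have i1 := hd1 (fun a => fs (lift ord0 ord0) (a, w.2)).
  have i2 := hd2 (fun b => fs (lift ord0 (lift ord0 ord0)) (w.1, b)).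
  rewrite /C0 /C1 /C2 in hw; move: hw; case: eqP => [e|_] hw; last by lra.
  rewrite /= e e1 in hw; rewrite e in i1 *; lra.
- have ne := SP_ne c1 c2.
  apply: delta_fin => d d0.
  have [p2 [hd2 e2]] := envelope (fun b => f0 (z0, b)) c2.
  have [p1 [hd1 _]] := envelope (fun _ => 0) c1.
  have p10 := dom_ge0 c1 hd1; have p11 := dom_sum1 c1 hd1.
  have p20 := dom_ge0 c2 hd2; have p21 := dom_sum1 c2 hd2.
  pose Sx := (fun w => w.1 = z0 \/ (exists j : 'I_3, csupp (msP P1 P2 (infP (SP P1 P2)) j) (fs j) w)).
  have hz : forall w, ~ Sx w -> (forall w', fs ord0 w' = 0) /\
     (forall a, fs (lift ord0 ord0) (a, w.2) = 0) /\
     (forall b, fs (lift ord0 (lift ord0 ord0)) (w.1, b) = 0).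
    move=> w nw; split; [|split].
    + move=> w'; apply: boolp.contrapT => h; apply: nw; right; exists ord0; by exists w'.
    + move=> a; apply: boolp.contrapT => h; apply: nw; right; exists (lift ord0 ord0).
      by exists (a, w.2).
    + move=> b; apply: boolp.contrapT => h; apply: nw; right.
      exists (lift ord0 (lift ord0 ord0)); by exists (w.1, b).
  have [w [hs hw]] := @lin_case2 R A B p1 p2 p10 p11 p20 p21 z0 Sx
    (fs ord0) (fs (lift ord0 ord0)) (fs (lift ord0 (lift ord0 ord0))) f0
    (fun w h => or_introl h) hz.
  exists w; split => //.
  rewrite !big_ord_recl big_ord0 /cgain /=.
  have hs' : SP P1 P2 (lin (prodw p1 p2)) by exists p1, p2.
  have i0 := infP_le (fs ord0) (SP_coh c1 c2) hs'.
  have i1 := hd1 (fun a => fs (lift ord0 ord0) (a, w.2)).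
  have i2 := hd2 (fun b => fs (lift ord0 (lift ord0 ord0)) (w.1, b)).
  rewrite /C0 /C1 /C2 in hw; move: hw; case: eqP => [e|_] hw; last by lra.
  rewrite /= e e2 in hw; rewrite e in i2 *; lra.
Qed.


Lemma ip_ne (R : realType) (A B : finType) (P1 : (A -> R) -> R) (P2 : (B -> R) -> R) :
  coherent P1 -> coherent P2 -> exists E, indep_product P1 P2 E.
Proof.
move=> c1 c2; exists (infP (SP P1 P2)); split.
- exact: infP_coh (SP_ne c1 c2) (SP_coh c1 c2).
- by move=> g; apply: SP_marg1.
- by move=> h; apply: SP_marg2.
- exact: SP_jc.
Qed.

Lemma ine_coh (R : realType) (A B : finType) (P1 : (A -> R) -> R) (P2 : (B -> R) -> R) :
  coherent P1 -> coherent P2 -> coherent (ine P1 P2).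
Proof.
move=> c1 c2; apply: (@infP_coh R _ (indep_product P1 P2)).
  exact: ip_ne.
by move=> E [].
Qed.

Lemma ip_cond (R : realType) (A B : finType) (P1 : (A -> R) -> R) (P2 : (B -> R) -> R) E :
  coherent P1 -> indep_product P1 P2 E ->
  forall f, E (fun w => P2 (fun b => f (w.1, b))) <= E f.
Proof.
move=> c1 [cE m1 m2 jc] f.
have := jc (fun j : 'I_3 => match val j with
                             | 0 => fun w => P2 (fun b => f (w.1, b))
                             | 1 => fun _ => 0
                             | _ => f end) ord0 f tt.
case=> w [_]; rewrite !big_ord_recl big_ord0 /cgain /=.
rewrite (coh0 c1); lra.
Qed.

Lemma key_factor (R : realType) (A B : finType) (P1 : (A -> R) -> R) (P2 : (B -> R) -> R)
  (o : A) (h : B -> R) :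
  coherent P1 -> coherent P2 -> 0 < P1 (ind o) -> 0 < P2 h ->
  0 < ine P1 P2 (fun w => (w.1 == o)%:R * h w.2).
Proof.
move=> c1 c2 h1 h2.
apply: (@lt_le_trans _ _ (P2 h * P1 (ind o))); first exact: mulr_gt0.
apply: (@infP_ge R _ (indep_product P1 P2)); first exact: ip_ne.
move=> E hE; apply: le_trans (ip_cond c1 hE _).
pose G := fun a : A => P2 (fun b => (a == o)%:R * h b).
have e : E (fun w => P2 (fun b => ((w.1, b).1 == o)%:R * h (w.1, b).2)) = P1 G.
  by case: hE => _ m1 _ _; exact: (m1 G).
rewrite e.
have -> : P1 G = P1 (fun a => P2 h * ind o a).
  by apply: coh_ext => a; rewrite /G (coh_hom c2) ?ler0n // mulrC.
by rewrite (coh_hom c1) // ltW.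
Qed.

Lemma comp_coh (R : realType) (X1 W1 : finType) (Qc : (X1 -> R) -> R)
  (Ec : X1 -> (W1 -> R) -> R) :
  coherent Qc -> (forall x, coherent (Ec x)) ->
  coherent (fun h : (X1 * W1)%type -> R => Qc (fun x => Ec x (fun w => h (x, w)))).
Proof.
move=> cQ cE; split.
- move=> h; have [x hx] := coh_min cQ (fun x => Ec x (fun w => h (x, w))).
  have [w hw] := coh_min (cE x) (fun w => h (x, w)).
  by exists (x, w); apply: le_trans hw hx.
- move=> l h l0.
  rewrite -(coh_hom cQ _ l0); apply: coh_ext => x.
  exact: (coh_hom (cE x) (fun w => h (x, w)) l0).
- move=> f g; apply: le_trans (coh_sadd cQ _ _) _.
  apply: coh_mono => // x; exact: (coh_sadd (cE x)).
Qed.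

Lemma qstep (R : realType) (T : finType) (Qc : (T -> R) -> R) (x1 : T) (c : R) :
  coherent Qc -> 0 < Qc (ind x1) -> Qc (fun x => (x == x1)%:R * c) <= 0 -> c <= 0.
Proof.
move=> cQ hq hle; rewrite leNgt; apply/negP => c0.
have e : Qc (fun x => (x == x1)%:R * c) = c * Qc (ind x1).
  rewrite -(coh_hom cQ _ (ltW c0)); apply: coh_ext => x; by rewrite mulrC.
have := mulr_gt0 c0 hq; lra.
Qed.


Lemma Ecal_coh (R : realType) (X O : nat -> finType) (n : nat)
    (Q : forall k, X k -> (X k.+1 -> R) -> R)
    (S : forall k, X k -> (O k -> R) -> R)
    (hQ : forall k, (k < n)%N -> forall z : X k, coherent (Q k z))
    (hS : forall k, (1 <= k <= n)%N -> forall z : X k, coherent (S k z)) :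
  forall d k, (1 <= k)%N -> (k + d <= n)%N -> forall x : X k,
    coherent (@Ecal R X O Q S d k x).
Proof.
elim => [|d IH] k k1 kn x /=.
  by apply: hS; rewrite k1 -(addn0 k).
apply: ine_coh; first by apply: hS; rewrite k1 /=; apply: leq_trans kn; rewrite leq_addr.
apply: (@comp_coh R (X k.+1) (W X O d k.+1) (Q k x)
          (fun y => @Ecal R X O Q S d k.+1 y)).
  by apply: hQ; apply: leq_trans kn; rewrite addnS ltnS leq_addr.
by move=> y; apply: IH => //; rewrite addSnnS.
Qed.


Local Close Scope classical_set_scope.
Unset Implicit Arguments.

Theorem theorem2 (R : realType) (X O : nat -> finType) (n : nat)
    (Q : forall k, X k -> (X k.+1 -> R) -> R)
    (S : forall k, X k -> (O k -> R) -> R)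
    (hX0 : #|X 0%N| = 1%N)
    (hXne : forall k, (1 <= k <= n)%N -> (0 < #|X k|)%N)
    (hOne : forall k, (1 <= k <= n)%N -> (0 < #|O k|)%N)
    (hQ : forall k, (k < n)%N -> forall z : X k, coherent (Q k z))
    (hS : forall k, (1 <= k <= n)%N -> forall z : X k, coherent (S k z))
    (hQpos : forall k, (k < n)%N -> forall (z : X k) (x : X k.+1),
        0 < upper (Q k z) (ind x))
    (hSpos : forall k, (1 <= k <= n)%N -> forall (z : X k) (o : O k),
        0 < upper (S k z) (ind o))
    (j d : nat) (hn : (j.+1 + d.+1 = n)%N)
    (z : X j) (o : XS O d.+1 j.+1) (xh : XS X d.+1 j.+1) :
  0 < Q j z (ind xh.1) ->
  0 < S j.+1 xh.1 (ind o.1) ->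
  @opt R X O Q S d.+1 j z o xh ->
  @opt R X O Q S d j.+1 xh.1 o.2 xh.2.
Proof.
move: xh o => [xh1 xh2] [o1 o2] /= hq hs hopt x.
have cE := @Ecal_coh R X O n Q S hQ hS.
rewrite leNgt; apply/negP => hpos.
pose G := (fun y : Y X O d.+1 j.+1 => ((@projO X O d.+1 j.+1 y == (o1, o2))%:R *
   ((@projX X O d.+1 j.+1 y == (xh1, x))%:R - (@projX X O d.+1 j.+1 y == (xh1, xh2))%:R) : R)).
have h1 : @Pcal R X O Q S d.+1 j z G <= 0 := hopt (xh1, x).
pose c := @Ecal R X O Q S d.+1 j.+1 xh1 (fun w => G (xh1, w)).
have hjn : (j < n)%N by rewrite -hn addSn ltnS leq_addr.
have hkn : (j.+1 + d.+1 <= n)%N by rewrite hn.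
have hc : c <= 0.
  apply: (qstep (hQ j hjn z) hq).
  have -> : Q j z (fun x0 => (x0 == xh1)%:R * c) = @Pcal R X O Q S d.+1 j z G.
    rewrite /Pcal; apply: coh_ext => x1.
    case: (eqVneq x1 xh1) => [->|ne]; first by rewrite mul1r.
    rewrite mul0r.
    have -> : @Ecal R X O Q S d.+1 j.+1 x1 (fun w => G (x1, w)) =
              @Ecal R X O Q S d.+1 j.+1 x1 (fun _ => 0).
      apply: coh_ext => w; rewrite /G /= !xpair_eqE (negbTE ne) /=.
      by rewrite subrr mulr0.
    by rewrite (coh0 (cE d.+1 j.+1 isT hkn x1)).
  exact: h1.
pose hg := (fun y : Y X O d j.+2 => ((@projO X O d j.+2 y == o2)%:R *
   ((@projX X O d j.+2 y == x)%:R - (@projX X O d j.+2 y == xh2)%:R) : R)).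
have hpos' : 0 < @Pcal R X O Q S d j.+1 xh1 hg := hpos.
have hP2 : coherent (@Pcal R X O Q S d j.+1 xh1).
  apply: (@comp_coh R (X j.+2) (W X O d j.+2) (Q j.+1 xh1)
          (fun y => @Ecal R X O Q S d j.+2 y)).
    by apply: hQ; rewrite -hn addSn ltnS addnS ltnS leq_addr.
  by move=> y; apply: cE => //; rewrite addSnnS.
have hS1 : coherent (S j.+1 xh1) by apply: hS; rewrite /= -hn addSn ltnS leq_addr.
have := key_factor hS1 hP2 hs hpos'.
have -> : ine (S j.+1 xh1) (@Pcal R X O Q S d j.+1 xh1)
      (fun w => (w.1 == o1)%:R * hg w.2) = c.
  rewrite /c /=; congr (ine _ _ _); apply: boolp.funext => w.
  rewrite /G /hg /= !xpair_eqE eqxx /=.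
  by case: (w.1 == o1); rewrite /= ?mul1r ?mul0r.
lra.
Qed.
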